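(* Let $G$ be a connected graph with $n$ vertices and matching number $k$, where $2\le k<\lfloor n/2\rfloor$. Then $\sigma_0(G)\ge 2-\frac kn$ and $\sigma_1(G)\ge 4n-3k$. In each bound, equality holds if and only if $G=K_k\vee\overline{K}_{n-k}$.
   Context: All graphs are finite, simple, undirected. For a connected graph $G$ and $u\in V(G)$, $\varepsilon_G(u)=\max_v d_G(u,v)$; $\sigma_0(G)=\frac1{|V(G)|}\sum_u\varepsilon_G(u)$, $\sigma_1(G)=\sum_u\varepsilon_G(u)^2$. The matching number is the maximum number of pairwise disjoint edges. $K_r$ is the complete graph, $\overline{K}_r$ the edgeless graph on $r$ vertices, and $G\vee H$ (the join) is obtained from the disjoint union of $G$ and $H$ by adding all edges between $V(G)$ and $V(H)$. *)

(* Defs.v *)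
From mathcomp Require Import all_boot all_order all_algebra.
Set Implicit Arguments. Unset Strict Implicit. Unset Printing Implicit Defensive.
Import Order.TTheory GRing.Theory Num.Theory.

Section Graphs.
Variable T : finType.
Variable e : rel T.

Definition simple_graph := symmetric e /\ irreflexive e.

Definition connected_graph := forall x y : T, connect e x y.

Fixpoint nball (m : nat) (x : T) : {set T} :=
  match m with
  | 0 => [set x]
  | m'.+1 => nball m' x :|: [set z | [exists y in nball m' x, e y z]]
  end.

(* graph distance: least m with y within m steps of x (searched over 0..#|T|;
   always found for connected graphs) *)
Definition dist (x y : T) : nat :=
  find (fun m => y \in nball m x) (iota 0 #|T|.+1).

Definition ecc (u : T) : nat := \max_(v : T) dist u v.

Definition sigma0 : rat := ((\sum_(u : T) ecc u)%:R / #|T|%:R)%R.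

Definition sigma1 : nat := \sum_(u : T) (ecc u) ^ 2.

Definition is_matching (M : {set {set T}}) : bool :=
  [forall A in M, exists x, exists y, e x y && (A == [set x; y])] && trivIset M.

Definition matching_number : nat :=
  \max_(M : {set {set T}} | is_matching M) #|M|.

End Graphs.

Definition complete_rel (A : finType) : rel A := fun x y => x != y.
Definition empty_rel (A : finType) : rel A := fun _ _ => false.

Definition join_rel (A B : finType) (eA : rel A) (eB : rel B) : rel (A + B)%type :=
  fun u v => match u, v with
             | inl a, inl a' => eA a a'
             | inr b, inr b' => eB b b'
             | _, _ => true
             end.

Definition KjoinEmpty (k n : nat) : rel ('I_k + 'I_(n - k))%type :=
  join_rel (@complete_rel 'I_k) (@empty_rel 'I_(n - k)).

Arguments KjoinEmpty k n : clear implicits.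

Definition isomorphic (T U : finType) (e : rel T) (f : rel U) : Prop :=
  exists g : T -> U, bijective g /\ forall x y, e x y = f (g x) (g y).

(* Main.v *)
Require Import Defs.
From mathcomp Require Import all_boot all_order all_algebra.
From mathcomp Require Import zify ring.
Import Order.TTheory GRing.Theory Num.Theory.
Set Implicit Arguments. Unset Strict Implicit.

Lemma T_gt0 (T : finType) (u : T) : 0 < #|T|.
Proof. by apply/card_gt0P; exists u. Qed.

Lemma dist_mem (T : finType) (e : rel T) u v :
  dist e u v <= #|T| -> v \in nball e (dist e u v) u.
Proof.
rewrite /dist => H.
have Hs : has (fun m => v \in nball e m u) (iota 0 #|T|.+1).
  by rewrite has_find size_iota ltnS.
have := nth_find 0 Hs.
by rewrite nth_iota // ltnS.
Qed.

Lemma dist_le (T : finType) (e : rel T) u v i :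
  i <= #|T| -> v \in nball e i u -> dist e u v <= i.
Proof.
move=> Hi Hv; rewrite leqNgt; apply/negP => Hlt.
have := before_find 0 Hlt.
by rewrite nth_iota ?ltnS //= Hv.
Qed.

Lemma dist0 (T : finType) (e : rel T) u v : dist e u v = 0 -> v = u.
Proof.
move=> H; have := @dist_mem T e u v; rewrite H /= => /(_ isT).
by rewrite in_set1 => /eqP.
Qed.

Lemma dist1 (T : finType) (e : rel T) u v : dist e u v = 1 -> v = u \/ e u v.
Proof.
move=> H; have := @dist_mem T e u v; rewrite H /= T_gt0 // => /(_ isT).
rewrite !inE => /orP[/eqP->|/existsP[y /andP[]]]; first by left.
by rewrite inE => /eqP-> ; right.
Qed.

Lemma dist_ge2 (T : finType) (e : rel T) u v :
  v != u -> ~~ e u v -> 2 <= dist e u v.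
Proof.
move=> Hvu Hne; case Hd: (dist e u v) => [|[|m]] //.
  by move: Hvu; rewrite (dist0 Hd) eqxx.
case: (dist1 Hd) => [E|E]; first by move: Hvu; rewrite E eqxx.
by move: Hne; rewrite E.
Qed.

Lemma dist_ge1 (T : finType) (e : rel T) u v : v != u -> 1 <= dist e u v.
Proof.
move=> Hvu; case Hd: (dist e u v) => [|m] //.
by move: Hvu; rewrite (dist0 Hd) eqxx.
Qed.

Definition univ (T : finType) (e : rel T) : {set T} :=
  [set u | [forall v, (v != u) ==> e u v]].

Lemma univP (T : finType) (e : rel T) u :
  reflect (forall v, v != u -> e u v) (u \in univ e).
Proof.
rewrite inE; apply: (iffP forallP) => H v; first by move=> Hv; move: (H v); rewrite Hv.
by apply/implyP; apply: H.
Qed.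

Lemma nball1 (T : finType) (e : rel T) u v : (v == u) || e u v -> v \in nball e 1 u.
Proof.
case/orP => H /=; rewrite !inE; first by rewrite H.
by apply/orP; right; apply/existsP; exists u; rewrite inE eqxx.
Qed.

Lemma ecc_ge1 (T : finType) (e : rel T) u : 2 <= #|T| -> 1 <= ecc e u.
Proof.
move=> HT.
have : 0 < #|[set~ u]| by rewrite cardsC1; case: #|T| HT => [|[|]].
case/card_gt0P => v; rewrite !inE => Hv.
by apply: leq_trans (dist_ge1 e Hv) (leq_bigmax _).
Qed.

Lemma ecc_ge2 (T : finType) (e : rel T) u : u \notin univ e -> 2 <= ecc e u.
Proof.
move=> Hu.
have [v Hv Hne] : exists2 v, v != u & ~~ e u v.
  apply/exists_inP; move: Hu; rewrite inE negb_forall => /existsP[v].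
  by rewrite negb_imply => /andP[H1 H2]; apply/exists_inP; exists v.
by apply: leq_trans (dist_ge2 Hv Hne) (leq_bigmax _).
Qed.

Lemma ecc_le1 (T : finType) (e : rel T) u : u \in univ e -> ecc e u <= 1.
Proof.
move/univP=> Hu; apply/bigmax_leqP => v _.
apply: dist_le; first exact: T_gt0 u.
apply: nball1; case: eqP => //= /eqP; exact: Hu.
Qed.

Lemma ecc_le2 (T : finType) (e : rel T) u w : symmetric e -> 2 <= #|T| ->
  w \in univ e -> ecc e u <= 2.
Proof.
move=> Hsym HT /univP Hw; apply/bigmax_leqP => v _.
apply: dist_le => //.
have [Hvu|Hvu] := boolP ((v == u) || e u v).
  by rewrite /= inE (nball1 Hvu).
rewrite /= !inE; apply/orP; right; apply/existsP; exists w.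
have Hwu : w != u.
  apply/negP => /eqP Ewu; move: Hvu; rewrite negb_or => /andP[Hvu Hnu].
  by move: Hnu; rewrite -Ewu Hw // Ewu.
rewrite (nball1 (u:=u) (v:=w)); last by apply/orP; right; rewrite Hsym Hw // eq_sym.
have [Evw|Evw] := eqVneq v w.
  by move: Hvu; rewrite Evw Hsym Hw ?orbT // eq_sym.
by rewrite Hw.
Qed.

Lemma disjP (T : finType) (A B : {set T}) :
  reflect (forall x, x \in A -> x \notin B) [disjoint A & B].
Proof.
rewrite disjoint_subset; apply: (iffP subsetP) => H x /H; by rewrite ?inE.
Qed.

Lemma matching_set0 (T : finType) (e : rel T) M : is_matching e M -> set0 \notin M.
Proof.
case/andP => /forall_inP H _; apply/negP => /H /existsP[x /existsP[y /andP[_ /eqP E]]].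
by have := set21 x y; rewrite -E inE.
Qed.

Lemma grow (T : finType) (e : rel T) m : forall (M0 : {set {set T}}) (A B : {set T}),
  is_matching e M0 -> #|A| = m -> m <= #|B| -> [disjoint A & B] ->
  (forall X, X \in M0 -> [disjoint X & A :|: B]) ->
  (forall a, a \in A -> forall v, v != a -> e a v) ->
  exists M, is_matching e M /\ #|M| = #|M0| + m.
Proof.
elim: m => [|m IH] M0 A B HM HA HB HAB HX Hu.
  by exists M0; rewrite addn0.
have [a Ha] : exists a, a \in A by apply/card_gt0P; rewrite HA.
have [b Hb] : exists b, b \in B by apply/card_gt0P; apply: leq_trans HB.
have Hba : b != a.
  by apply/negP => /eqP E; move/disjP: HAB => /(_ a Ha); rewrite -E Hb.
have Hab : e a b by apply: Hu.
have HaB : a \notin B by move/disjP: HAB; apply.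
have HbA : b \notin A by apply/negP => /(disjP _ _ HAB); rewrite Hb.
set X := [set a; b].
have HXd : {in M0, forall Y : {set T}, [disjoint X & Y]}.
  move=> Y /HX /disjP HY; apply/disjP => x; rewrite !inE => /orP[]/eqP->.
    by apply/negP => /HY; rewrite inE Ha.
  by apply/negP => /HY; rewrite inE Hb orbT.
case/andP: (HM) => HM1 HM2.
have [HT HXn] := trivIsetU1 HXd HM2 (matching_set0 HM).
have HM' : is_matching e (X |: M0).
  apply/andP; split => //; apply/forall_inP => Y; case/setU1P => [->|].
    by apply/existsP; exists a; apply/existsP; exists b; rewrite Hab eqxx.
  by move/forall_inP: HM1; apply.
have HD : forall Y, Y \in X |: M0 -> [disjoint Y & (A :\ a) :|: (B :\ b)].
  move=> Y; case/setU1P => [->|/HX].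
    apply/disjP => x; rewrite !inE => /orP[]/eqP->.
      by rewrite eqxx /= (negbTE HaB) andbF.
    by rewrite eqxx /= (negbTE HbA) andbF orbF.
  by apply: disjointWr; apply: setUSS; apply: subD1set.
have HA' : #|A :\ a| = m by move: HA; rewrite (cardsD1 a A) Ha add1n; case.
have HB' : m <= #|B :\ b| by move: HB; rewrite (cardsD1 b B) Hb add1n.
have HAB' : [disjoint A :\ a & B :\ b] by apply: disjointW HAB; apply: subD1set.
have Hu' : forall a', a' \in A :\ a -> forall v, v != a' -> e a' v.
  by move=> a' /setD1P[_ Ha']; apply: Hu.
have [M [HM3 HM4]] := IH (X |: M0) (A :\ a) (B :\ b) HM' HA' HB' HAB' HD Hu'.
exists M; split => //; rewrite HM4 cardsU1 HXn add1n addSn addnS //.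
Qed.

Lemma sub_card (T : finType) (U : {set T}) m : m <= #|U| -> exists A : {set T}, A \subset U /\ #|A| = m.
Proof.
elim: m => [|m IH] Hm; first by exists (set0 : {set T}); rewrite sub0set cards0.
have [A [HAU HA]] := IH (ltnW Hm).
have : U :\: A != set0.
  rewrite setD_eq0; apply/negP => /subset_leq_card; rewrite HA; lia.
case/set0Pn => x /setDP[HxU HxA].
exists (x |: A); rewrite cardsU1 HxA HA; split => //.
by apply/subsetP => z /setU1P[->|/(subsetP HAU)].
Qed.

Lemma matching_le (T : finType) (e : rel T) M : is_matching e M -> #|M| <= matching_number e.
Proof. by move=> H; apply: (leq_bigmax_cond (P := fun M => is_matching e M)). Qed.

Lemma univ_le_k (T : finType) (e : rel T) :
  (matching_number e).*2.+2 <= #|T| -> #|univ e| <= matching_number e.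
Proof.
move=> Hn; rewrite leqNgt; apply/negP => Hlt.
have [A [HAU HA]] := sub_card Hlt.
have HM0 : is_matching e set0.
  apply/andP; split; first by apply/forall_inP => X; rewrite inE.
  by apply/trivIsetP => X Y; rewrite inE.
have HB : (matching_number e).+1 <= #|~: A|.
  have := cardsC A; move: Hn; rewrite -addnn HA; lia.
have HAB : [disjoint A & ~: A] by rewrite disjoints_subset setCK.
have HX : forall X, X \in (set0 : {set {set T}}) -> [disjoint X & A :|: ~: A] by move=> X; rewrite inE.
have Hu : forall a, a \in A -> forall v, v != a -> e a v by move=> a /(subsetP HAU) /univP.
have [M [HM HMc]] := grow HM0 HA HB HAB HX Hu.
have := matching_le HM; rewrite HMc cards0; lia.
Qed.

Lemma indep (T : finType) (e : rel T) : simple_graph e ->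
  (matching_number e).*2.+2 <= #|T| -> #|univ e| = matching_number e ->
  forall x y, x \notin univ e -> y \notin univ e -> ~~ e x y.
Proof.
case=> Hsym Hirr Hn Ht x y Hx Hy; apply/negP => Hxy.
have Hxy' : x != y by apply/negP => /eqP E; move: Hxy; rewrite E Hirr.
set X := [set x; y].
have HM0 : is_matching e [set X].
  apply/andP; split; last exact: trivIset1.
  by apply/forall_inP => Z; rewrite inE => /eqP->; apply/existsP; exists x; apply/existsP; exists y; rewrite Hxy eqxx.
set B := ~: (univ e :|: X).
have HB : #|univ e| <= #|B|.
  have H1 := cardsC (univ e :|: X).
  have H2 : #|univ e :|: X| <= #|univ e| + 2.
    by apply: leq_trans (leq_card_setU _ _).1 _; rewrite cards2 Hxy'.
  move: Hn; rewrite -addnn -/B in H1 *; rewrite Ht in H2 *; lia.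
have HAB : [disjoint univ e & B].
  by apply/disjP => z Hz; rewrite in_setC in_setU Hz.
have HX : forall Z, Z \in [set X] -> [disjoint Z & univ e :|: B].
  move=> Z; rewrite in_set1 => /eqP->; apply/disjP => z; rewrite in_set2 => /orP[]/eqP->;
    rewrite in_setU in_setC in_setU in_set2 eqxx ?orbT /= ?(negbTE Hx) ?(negbTE Hy) //.
have Hu : forall a, a \in univ e -> forall v, v != a -> e a v by move=> a /univP.
have [M [HM HMc]] := grow HM0 (erefl _) HB HAB HX Hu.
have := matching_le HM; rewrite HMc cards1 Ht; lia.
Qed.

Lemma iso_univ (T : finType) (e : rel T) k n :
  isomorphic e (KjoinEmpty k n) -> k <= #|univ e|.
Proof.
case=> g [[h gK hK] He].
have Hinj : injective (fun a : 'I_k => h (inl a)).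
  by move=> a b /(congr1 g); rewrite !hK => -[].
have <- : #|[set h (inl a) | a in [set: 'I_k]]| = k by rewrite card_imset // cardsT card_ord.
apply: subset_leq_card; apply/subsetP => _ /imsetP[a _ ->].
apply/univP => v Hv; rewrite He hK /KjoinEmpty /join_rel.
case Hgv: (g v) => [a'|b'] //=.
rewrite /complete_rel; apply/negP => /eqP Eaa.
by move: Hv; rewrite Eaa -Hgv gK eqxx.
Qed.

Lemma build_iso (T : finType) (e : rel T) k n : simple_graph e -> #|univ e| = k -> #|T| = n ->
  k < n -> 0 < k -> (forall x y, x \notin univ e -> y \notin univ e -> ~~ e x y) ->
  isomorphic e (KjoinEmpty k n).
Proof.
case=> Hsym Hirr Ht Hn Hkn Hk0 Hind.
have [x0 Hx0] : exists x0, x0 \in univ e by apply/card_gt0P; rewrite Ht.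
have Hc : #|~: univ e| = n - k by have := cardsC (univ e); lia.
have [x1 Hx1] : exists x1, x1 \in ~: univ e by apply/card_gt0P; rewrite Hc; lia.
pose g (x : T) : 'I_k + 'I_(n-k) := if x \in univ e then inl (cast_ord Ht (enum_rank_in Hx0 x))
  else inr (cast_ord Hc (enum_rank_in Hx1 x)).
pose h (y : 'I_k + 'I_(n-k)) : T := match y with
  | inl a => enum_val (cast_ord (esym Ht) a) | inr b => enum_val (cast_ord (esym Hc) b) end.
exists g; split.
  exists h.
    move=> x; rewrite /g; case: ifP => Hx /=; rewrite cast_ordK enum_rankK_in //.
    by rewrite inE Hx.
  case => [a|b] /=; rewrite /g.
    by rewrite (enum_valP (cast_ord (esym Ht) a)) enum_valK_in cast_ordKV.
  have := enum_valP (cast_ord (esym Hc) b); rewrite inE => /negbTE->.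
  by rewrite enum_valK_in cast_ordKV.
move=> x y; rewrite /KjoinEmpty /join_rel /g; case: ifP => Hx; case: ifP => Hy /=.
- have -> : e x y = (x != y).
    case: eqVneq => [->|Hxy]; first exact: Hirr.
    by move/univP: Hx; apply; rewrite eq_sym.
  rewrite /complete_rel; congr (~~ _); apply/eqP/eqP => E; first by rewrite E.
  have := congr1 (fun i => enum_val (cast_ord (esym Ht) i)) E.
  by rewrite /= !cast_ordK !enum_rankK_in.
- by move/univP: (Hx); apply; apply/negP => /eqP E; move: Hy; rewrite E Hx.
- by rewrite Hsym; move/univP: (Hy); apply; apply/negP => /eqP E; move: Hx; rewrite E Hy.
- by apply/negbTE; apply: Hind; rewrite ?Hx ?Hy.
Qed.

Lemma sum_if (T : finType) (U : {set T}) a b :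
  \sum_(u : T) (if u \in U then a else b) = #|U| * a + #|~: U| * b.
Proof.
rewrite (bigID (fun u => u \in U)) /=.
rewrite (eq_bigr (fun _ => a)) => [|i ->] //.
rewrite [X in _ + X](eq_bigr (fun _ => b)) => [|i /negbTE ->] //.
rewrite !sum_nat_const; congr (_ * _ + _ * _); apply: eq_card => i; by rewrite !inE.
Qed.

Lemma ecc_f (T : finType) (e : rel T) u : 2 <= #|T| ->
  (if u \in univ e then 1 else 2) <= ecc e u.
Proof. by move=> HT; case: ifP => Hu; [apply: ecc_ge1 | apply: ecc_ge2; rewrite Hu]. Qed.

Lemma ecc_fe (T : finType) (e : rel T) u : symmetric e -> 2 <= #|T| -> 0 < #|univ e| ->
  ecc e u = (if u \in univ e then 1 else 2).
Proof.
move=> Hsym HT /card_gt0P[w Hw]; apply/eqP; rewrite eqn_leq ecc_f // andbT.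
by case: ifP => Hu; [apply: ecc_le1 | apply: ecc_le2 Hw].
Qed.

Unset Implicit Arguments.

Theorem proposition5p2 (T : finType) (e : rel T) :
  simple_graph e -> connected_graph e ->
  let n := #|T| in
  let k := matching_number e in
  (2 <= k)%N -> (k < n./2)%N ->
  ((2%:R - k%:R / n%:R <= sigma0 e :> rat)%R /\
   (sigma0 e = (2%:R - k%:R / n%:R)%R <-> isomorphic e (KjoinEmpty k n)))
  /\
  ((Posz (4 * n) - Posz (3 * k) <= Posz (sigma1 e) :> int)%R /\
   (Posz (sigma1 e) = (Posz (4 * n) - Posz (3 * k))%R <-> isomorphic e (KjoinEmpty k n))).
Proof.
move=> Hs _ n k Hk2 Hkn.
have Hn : k.*2.+2 <= n by move: Hkn; rewrite -[k < _]/(k.+1 <= _) geq_half_double doubleS.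
have Hn' : 2 * k + 2 <= n by move: Hn; rewrite -mul2n; lia.
set t := #|univ e|.
have Htk : t <= k by apply: univ_le_k.
have HT2 : 2 <= #|T| by rewrite -/n; lia.
have Hc : #|~: univ e| = n - t by have := cardsC (univ e); rewrite -/n -/t; lia.
have Hiso : isomorphic e (KjoinEmpty k n) <-> t = k.
  split; first by move/iso_univ => H; apply/eqP; rewrite eqn_leq Htk H.
  move=> Etk; apply: build_iso => //; try lia.
  by apply: indep.
set S := \sum_(u : T) ecc e u.
set S1 := sigma1 e.
have HS : t + 2 * (n - t) <= S.
  by have := sum_if (univ e) 1 2; rewrite Hc muln1 mulnC => <-; apply: leq_sum => u _; apply: ecc_f.
have HS1 : t + 4 * (n - t) <= S1.
  have := sum_if (univ e) 1 4; rewrite Hc muln1 mulnC => <-; apply: leq_sum => u _.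
  have := ecc_f e u HT2; case: ifP => _ H;
  by apply: leq_trans (leq_mul H H) _; rewrite mulnn.
have HSe : t = k -> S = t + 2 * (n - t).
  move=> Etk; have := sum_if (univ e) 1 2; rewrite Hc muln1 mulnC => <-; apply: eq_bigr => i _.
  by rewrite ecc_fe //; [case: Hs | rewrite -/t; lia].
have HS1e : t = k -> S1 = t + 4 * (n - t).
  move=> Etk; have := sum_if (univ e) 1 4; rewrite Hc muln1 mulnC => <-; apply: eq_bigr => i _.
  rewrite ecc_fe //; [by case: ifP | by case: Hs | rewrite -/t; lia].
have Hn0 : (n%:R : rat) != 0%R by rewrite pnatr_eq0; lia.
have E0 : (2%:R - k%:R / n%:R : rat)%R = ((2 * n - k)%N%:R / n%:R)%R.
  rewrite natrB; last by lia.
  rewrite natrM; field; exact: Hn0.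
have Hsig : sigma0 e = (S%:R / n%:R)%R by [].
split; split.
- rewrite E0 Hsig ler_pM2r ?invr_gt0 ?ltr0n; last by lia.
  by rewrite ler_nat; lia.
- rewrite Hiso E0 Hsig; split.
    move/(mulIf (invr_neq0 Hn0))/eqP; rewrite eqr_nat => /eqP H; lia.
  by move=> Etk; rewrite (HSe Etk) Etk; congr ((_%:R / _)%R); lia.
- rewrite -/S1; lia.
- rewrite Hiso -/S1; split; first lia.
  by move=> Etk; rewrite (HS1e Etk) Etk; lia.
Qed.
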